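(* Let $P(\mathbf{x})$ be set-multilinear with respect to $\mathbf{x}=\mathbf{x}_1\sqcup\cdots\sqcup\mathbf{x}_r$, and let $\mathbf{y}=\mathbf{x}_1\cup\cdots\cup\mathbf{x}_k$ and $\mathbf{z}=\mathbf{x}\setminus\mathbf{y}$. If the dimension of projected shifted partial derivatives is taken with respect to derivatives by set-multilinear monomials in $\mathbf{y}$ only, then for every $\ell$, $\Gamma^{\mathrm{PSPD}}_{k,\ell}(P)\le\Gamma^{\mathrm{SED}}_{k,\ell}(P)$.
   Context: A polynomial is set-multilinear with respect to $\mathbf{x}=\mathbf{x}_1\sqcup\cdots\sqcup\mathbf{x}_r$ if every monomial contains exactly one variable from each part. Let $|\mathbf{y}|=n_y$, $|\mathbf{z}|=n_z$, order variables with $\mathbf{y}$ first, and let $S\subseteq\{0,1\}^{n_y+n_z}$ be the set of strings that are zero on the $\mathbf{y}$ coordinates. For a polynomial $f$ and set $T$ of points, $\mathrm{Eval}_T(f)$ is the vector of values of $f$ on $T$. $\mathbf{z}^{=\ell}$ is the set of monomials of degree exactly $\ell$ in $\mathbf{z}$. Here $\Gamma^{\mathrm{PSPD}}_{k,\ell}(P)=\dim\mathrm{Span}\{\mathrm{Eval}_S(m\cdot \partial P/\partial\mathbf{y}^{\mathbf{e}}) : m\in\mathbf{z}^{=\ell},\ \mathbf{y}^{\mathbf{e}}$ a degree-$k$ monomial in $\mathbf{y}$ that is set-multilinear with respect to $\mathbf{x}_1\sqcup\cdots\sqcup\mathbf{x}_k\}$. The shifted evaluation dimension is $\Gamma^{\mathrm{SED}}_{k,\ell}(P)=\dim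 \mathrm{Span}\{\mathrm{Eval}_{\{0,1\}^{n_z}}(m\cdot P(\mathbf{a},\mathbf{z})) : m\in\mathbf{z}^{=\ell},\ \mathbf{a}\in\{0,1\}^{n_y}$ with at most $k$ ones$\}$. *)

(* Defs.v *)
From HB Require Import structures.
From mathcomp Require Import all_boot all_order all_algebra.
From mathcomp Require Import mpoly.

Set Implicit Arguments.
Unset Strict Implicit.
Unset Printing Implicit Defensive.

Import Order.TTheory GRing.Theory.
Local Open Scope ring_scope.

(* Variables are indexed by 'I_n; the partition x = x_1 ⊔ ... ⊔ x_r is given
   by [part : 'I_n -> 'I_r] (variable i lies in block x_(part i + 1)).
   y = x_1 ∪ ... ∪ x_k  is the set of variables with [part i < k],
   z = x \ y the others. *)

Definition is_y (n r k : nat) (part : 'I_n -> 'I_r) (i : 'I_n) : bool :=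
  (part i < k)%N.

Definition set_multilinear (F : fieldType) (n r : nat) (part : 'I_n -> 'I_r)
  (P : {mpoly F[n]}) : Prop :=
  forall m : 'X_{1..n}, m \in msupp P ->
    forall j : 'I_r, (\sum_(i < n | part i == j) m i)%N = 1%N.

(* The set S ⊆ {0,1}^n of boolean points that are zero on the y coordinates.
   It also serves as the index set {0,1}^{n_z} (a z-assignment, extended by
   zeros on y). *)
Definition Spt (n r k : nat) (part : 'I_n -> 'I_r) :=
  {a : {ffun 'I_n -> bool} | [forall i, is_y k part i ==> ~~ a i]}.

Definition EvalS (F : fieldType) (n r k : nat) (part : 'I_n -> 'I_r)
  (f : {mpoly F[n]}) : {ffun Spt k part -> F^o} :=
  [ffun s : Spt k part => f.@[fun i => ((val s) i)%:R]].

Definition z_monom (n r k : nat) (part : 'I_n -> 'I_r) (l : nat)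
  (m : 'X_{1..n}) : bool :=
  [forall i, is_y k part i ==> (m i == 0%N)] && (mdeg m == l).

Definition y_sml_monom (n r k : nat) (part : 'I_n -> 'I_r)
  (e : 'X_{1..n}) : bool :=
  [forall i, ~~ is_y k part i ==> (e i == 0%N)] &&
  [forall j : 'I_r, (j < k)%N ==> ((\sum_(i < n | part i == j) e i)%N == 1%N)].

(* Γ^PSPD_{k,l}(P): monomials of degree l (resp. k) are enumerated inside the
   finite type of monomials of degree < l.+1 (resp. < k.+1). *)
Definition GammaPSPD (F : fieldType) (n r k : nat) (part : 'I_n -> 'I_r)
  (l : nat) (P : {mpoly F[n]}) : nat :=
  \dim (span [seq EvalS k part ('X_[val me.1] * mderivm (val me.2) P)
             | me <- enum {: prod 'X_{1..n < l.+1} 'X_{1..n < k.+1}} &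
               z_monom k part l (val me.1) && y_sml_monom k part (val me.2)]).

Definition subst_y (F : fieldType) (n r k : nat) (part : 'I_n -> 'I_r)
  (a : {ffun 'I_n -> bool}) (P : {mpoly F[n]}) : {mpoly F[n]} :=
  P \mPo [tuple (if is_y k part i then ((a i)%:R)%:MP else 'X_i) | i < n].

(* a ∈ {0,1}^{n_y} (encoded as a point zero on the z coordinates) with at
   most k ones. *)
Definition y_point (n r k : nat) (part : 'I_n -> 'I_r)
  (a : {ffun 'I_n -> bool}) : bool :=
  [forall i, ~~ is_y k part i ==> ~~ a i] && (#|[pred i | a i]| <= k)%N.

Definition GammaSED (F : fieldType) (n r k : nat) (part : 'I_n -> 'I_r)
  (l : nat) (P : {mpoly F[n]}) : nat :=
  \dim (span [seq EvalS k part ('X_[val ma.1] * subst_y k part ma.2 P)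
             | ma <- enum {: prod 'X_{1..n < l.+1} {ffun 'I_n -> bool}} &
               z_monom k part l (val ma.1) && y_point k part ma.2]).

(* Main.v *)
Require Import Defs.
From HB Require Import structures.
From mathcomp Require Import all_boot all_order all_algebra.
From mathcomp Require Import mpoly.
From mathcomp Require Import zify.

Set Implicit Arguments.
Unset Strict Implicit.
Unset Printing Implicit Defensive.
Import Order.TTheory GRing.Theory.
Local Open Scope ring_scope.

Lemma blk_le1 n r (part : 'I_n -> 'I_r) (f : 'I_n -> nat) j i :
  (\sum_(i0 < n | part i0 == j) f i0)%N = 1%N -> part i = j -> (f i <= 1)%N.
Proof. by move=> H pj; move: H; rewrite (bigD1 i) ?pj //= => <-; rewrite leq_addr. Qed.

Lemma blk_uniq n r (part : 'I_n -> 'I_r) (f : 'I_n -> nat) j i i' :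
  (\sum_(i0 < n | part i0 == j) f i0)%N = 1%N -> part i = j -> part i' = j ->
  i' != i -> f i != 0%N -> f i' = 0%N.
Proof.
move=> H pj pj' ne fi; move: H; rewrite (bigD1 i) ?pj //= (bigD1 i') /=; last first.
  by rewrite pj' eqxx ne.
move: fi; lia.
Qed.

Lemma blk_ex n r (part : 'I_n -> 'I_r) (f : 'I_n -> nat) j :
  (\sum_(i0 < n | part i0 == j) f i0)%N = 1%N -> exists i', part i' = j /\ f i' != 0%N.
Proof.
move=> H; case: (boolP [exists i', (part i' == j) && (f i' != 0%N)]).
  by move=> /existsP [i' /andP [/eqP ? ?]]; exists i'.
rewrite negb_exists => /forallP H2; move: H; rewrite big1 // => i /eqP pi.
by have := H2 i; rewrite pi eqxx /= negbK => /eqP.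
Qed.

Lemma key (F : fieldType) n r k (part : 'I_n -> 'I_r) (P : {mpoly F[n]})
  (e : 'X_{1..n}) (v : 'I_n -> F) :
  set_multilinear part P -> y_sml_monom k part e ->
  (forall i, is_y k part i -> v i = 0) ->
  (mderivm e P).@[v] =
  P.@[fun i => if is_y k part i then ((e i != 0%N) : nat)%:R else v i].
Proof.
move=> sml /andP[/forallP ez /forallP eb] v0.
rewrite mderivmE raddf_sum /= mevalE; apply: eq_big_seq => m mP.
rewrite mevalZ mevalX -mulrA; congr (_ * _).
have mb := sml m mP.
have eyb i : is_y k part i -> (\sum_(i0 < n | part i0 == part i) e i0)%N = 1%N.
  by move=> yi; apply/eqP/(implyP (eb (part i)) yi).
have ey i : e i != 0%N -> is_y k part i.
  move=> ne; apply/negPn/negP => ny; move: ne.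
  by rewrite (eqP (implyP (ez i) ny)).
case: (boolP [forall i, (e i <= m i)%N]) => [/forallP le_em | ].
- have me i : is_y k part i -> m i = e i.
    move=> yi; have e1 := blk_le1 (eyb i yi) (erefl _).
    have m1 := blk_le1 (mb (part i)) (erefl _).
    have lei := le_em i.
    case E: (e i) => [|[|]]; rewrite E in e1 lei => //; last by lia.
    apply/eqP; apply/negP => /negP mne.
    have [i0 [pi0 ei0]] := blk_ex (eyb i yi).
    have ne : i0 != i by apply/eqP => Ei; move: ei0; rewrite Ei E.
    have := blk_uniq (mb (part i)) (erefl _) pi0 ne mne.
    have := le_em i0; move: ei0; lia.
  rewrite natr_prod -big_split /=; apply: eq_bigr => i _.
  case yi: (is_y k part i).
    rewrite mnmBE me // subnn expr0 mulr1.
    have := blk_le1 (eyb i yi) (erefl _).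
    by case: (e i) => [|[|]] //= _; rewrite ?ffactn0 ?ffactn1 ?expr0 ?expr1.
  by rewrite mnmBE (eqP (implyP (ez i) (negbT yi))) ffactn0 mul1r subn0.
- rewrite negb_forall => /existsP [i]; rewrite -ltnNge => lt_me.
  have ei1 : e i != 0%N by move: lt_me; lia.
  have yi := ey i ei1.
  have ei : e i = 1%N by move: (blk_le1 (eyb i yi) (erefl _)) ei1; lia.
  have mi0 : m i = 0%N by move: lt_me; rewrite ei; lia.
  have [i' [pi' mi']] := blk_ex (mb (part i)).
  have ne : i' != i by apply/eqP => E; move: mi'; rewrite E mi0.
  have ei'0 : e i' = 0%N by apply: (blk_uniq (eyb i yi) (erefl _) pi' ne ei1).
  have yi' : is_y k part i' by rewrite /is_y pi'.
  have -> : (\prod_(i0 < n) (m i0) ^_ (e i0))%N = 0%N.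
    by rewrite (bigD1 i) //= ffact_small ?mi0 ?ei // mul0n.
  rewrite mul0r (bigD1 i') //= yi' ei'0 /= expr0n (negbTE mi') /=.
  by rewrite mul0r.
Qed.

Theorem corollary4p6 (F : fieldType) (n r k : nat) (part : 'I_n -> 'I_r)
  (P : {mpoly F[n]}) :
  (k <= r)%N ->
  set_multilinear part P ->
  forall l : nat, (GammaPSPD k part l P <= GammaSED k part l P)%N.
Proof.
move=> kr sml l.
apply: dimvS; apply: sub_span => x /mapP [[m e] /=].
rewrite mem_filter => /andP[/andP[zm ye] _] ->.
apply/mapP; exists (m, [ffun i => val e i != 0%N]).
  rewrite mem_filter mem_enum andbT zm /=.
  move: (ye) => /andP[/forallP ez /forallP eb].
  apply/andP; split.
    apply/forallP => i; apply/implyP => ny; rewrite ffunE negbK.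
    exact: (implyP (ez i) ny).
  rewrite -sum1_card.
  apply: (@leq_trans (\sum_i val e i)%N).
    rewrite big_mkcond /=; apply: leq_sum => i _; rewrite inE ffunE.
    by case: (val e i).
  rewrite (partition_big part predT) //=.
  rewrite (eq_bigr (fun j : 'I_r => if (j < k)%N then 1%N else 0%N)); last first.
    move=> j _; case: ifP => jk.
      rewrite -(eqP (implyP (eb j) jk)); apply: eq_bigl => i //.
    rewrite big1 // => i /eqP pi; apply/eqP; apply: (implyP (ez i)).
    by rewrite /is_y pi jk.
  by rewrite -big_mkcond /= -(big_ord_widen _ (fun _ => 1%N) kr) sum1_card card_ord.
apply/ffunP => s; rewrite !ffunE !mevalM; congr (_ * _).
rewrite /subst_y comp_mpoly_meval (@key F n r k part P (val e) (fun i => ((val s i : nat)%:R : F))) //.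
  apply: meval_eq => i; rewrite tnth_mktuple ffunE.
  by case: ifP => _; rewrite ?mevalC ?mevalXU.
move=> i yi; have := forallP (valP s) i; rewrite yi /= => /negbTE ->.
by [].
Qed.
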